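(* Let $\pi\colon\mathcal W\to W$ be a continuous proper surjection between locally compact Hausdorff spaces, $C$ a co-meagre subset of $W$, and $\iota\colon C\to\mathcal W$ a continuous map with $\pi\circ\iota=\mathrm{id}_C$ and $\iota(C)$ dense in $\mathcal W$. Then $\pi$ and $\iota$ are weakly open.
   Context: A continuous map $f\colon Y\to X$ is weakly open if $f^{-1}(U)$ is dense in $Y$ whenever $U$ is open and dense in $X$. A set is co-meagre if its complement is a countable union of sets whose closures have empty interior. *)

(* Defs.v *)
From HB Require Import structures.
From mathcomp Require Import all_boot all_order all_algebra.
From mathcomp Require Import all_classical all_reals all_analysis.
Set Implicit Arguments. Unset Strict Implicit. Unset Printing Implicit Defensive.
Import Order.TTheory GRing.Theory Num.Theory.
Local Open Scope classical_set_scope.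

Definition weakly_open (Y X : topologicalType) (f : Y -> X) : Prop :=
  continuous f /\
  forall U : set X, open U -> dense U -> dense (f @^-1` U).

Definition proper_map (Y X : topologicalType) (f : Y -> X) : Prop :=
  forall K : set X, compact K -> compact (f @^-1` K).

Definition nowhere_dense (T : topologicalType) (A : set T) : Prop :=
  interior (closure A) = set0.

Definition comeagre (T : topologicalType) (C : set T) : Prop :=
  exists F : nat -> set T,
    (forall n, nowhere_dense (F n)) /\ ~` C = \bigcup_n F n.

(* Main.v *)
Require Import Defs.
From HB Require Import structures.
From mathcomp Require Import all_boot all_order all_algebra.
From mathcomp Require Import all_classical all_reals all_analysis.
Local Open Scope classical_set_scope.

Lemma shrink (W : topologicalType) : hausdorff_space W -> locally_compact [set: W] ->
  forall A : set W, open A -> A !=set0 ->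
  exists B : set W, [/\ open B, B !=set0, compact (closure B) & closure B `<=` A].
Proof.
move=> hW lcW A oA [x Ax].
have := lcW x I; rewrite withinET => -[P Px [cP clP]].
have reg := compact_regular hW cP Px.
have nA : nbhs x (A `&` P) by apply: filterI => //; exact: open_nbhs_nbhs.
have [N Nx NA] := reg _ nA.
exists (interior N); split.
- exact: open_interior.
- by exists x; exact: nbhs_singleton (nbhs_interior Nx).
- apply: (subclosed_compact _ cP); first exact: closed_closure.
  by move=> y /(closureS (@interior_subset _ N)) /NA [].
- by move=> y /(closureS (@interior_subset _ N)) /NA [].
Qed.

Fixpoint seqB (T : Type) (g : nat * set T -> set T) (V : set T) (n : nat) : set T :=
  match n with 0 => g (0%N, V) | S m => g (S m, seqB T g V m) end.
Arguments seqB {T}.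

Lemma baire_lc (W : topologicalType) : hausdorff_space W -> locally_compact [set: W] ->
  forall D : nat -> set W, (forall n, open (D n) /\ dense (D n)) ->
  forall V : set W, open V -> V !=set0 -> exists x, V x /\ forall n, D n x.
Proof.
move=> hW lcW D hD V oV V0.
have step : forall nA : nat * set W, exists B : set W,
    (open nA.2 /\ nA.2 !=set0) ->
    [/\ open B, B !=set0, compact (closure B) & closure B `<=` nA.2 `&` D nA.1].
  move=> [n A] /=.
  have [hA|hA] := pselect (open A /\ A !=set0); last by exists set0.
  have [oD dD] := hD n; case: hA => oA A0.
  have [B HB] := @shrink W hW lcW _ (openI oA oD) (dD _ A0 oA).
  by exists B.
have [g Hg] := choice step.
pose U := seqB g V.
have HU : forall n, [/\ open (U n), U n !=set0, compact (closure (U n)) &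
    closure (U n) `<=` (if n is S m then U m else V) `&` D n].
  elim=> [|n [oUn Un0 _ _]].
  - exact: (Hg (0%N, V)).
  - exact: (Hg (n.+1, U n)).
pose K n := closure (U n).
have Kdec : forall k n, K (n + k)%N `<=` K n.
  elim=> [n|k IH n]; first by rewrite addn0.
  rewrite addnS; apply: subset_trans (IH n).
  have [_ _ _ h] := HU (n + k).+1.
  by move=> y /h [] /subset_closure.
have Kdec' : forall m n, (n <= m)%N -> K m `<=` K n.
  by move=> m n /subnKC <-; exact: Kdec.
have Kcl : forall n, closed (K n) by move=> n; exact: closed_closure.
pose F := filter_from [set: nat] K.
have FF : ProperFilter F.
  apply: filter_from_proper.
    apply: filter_from_filter; first by exists 0%N.
    move=> i j _ _; exists (maxn i j) => //.
    by move=> y Ky; split; apply: (Kdec' (maxn i j)) => //;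
      rewrite ?leq_maxl ?leq_maxr.
  move=> n _; have [_ [y Uy] _ _] := HU n.
  by exists y; exact: subset_closure.
have [_ _ cK0 _] := HU 0%N.
have [p [K0p clp]] := cK0 F FF (ex_intro2 _ _ 0%N I (@subset_refl _ _)).
have Kp : forall n, K n p.
  move=> n; have -> : K n = closure (K n) by apply/closure_id; exact: Kcl.
  move=> B Bp; exact: clp (ex_intro2 _ _ n I (@subset_refl _ _)) Bp.
exists p; split; first by have [_ _ _ h] := HU 0%N; have [] := h _ (Kp 0%N).
case=> [|n]; first by have [_ _ _ h] := HU 0%N; have [] := h _ (Kp 0%N).
by have [_ _ _ h] := HU n.+1; have [] := h _ (Kp n.+1).
Qed.

Lemma comeagre_meets (W : topologicalType) : hausdorff_space W -> locally_compact [set: W] ->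
  forall C : set W, comeagre C -> forall G : set W, open G -> G !=set0 ->
  exists p, G p /\ C p.
Proof.
move=> hW lcW C [F [nF eC]] G oG G0.
have hD : forall n, open (~` closure (F n)) /\ dense (~` closure (F n)).
  move=> n; split; first exact/closed_openC/closed_closure.
  move=> O O0 oO; apply/set0P/negP => /eqP OD.
  case: O0 => x Ox.
  have : interior (closure (F n)) x.
    apply: filterS (open_nbhs_nbhs (conj oO Ox)) => y Oy.
    apply: contrapT => ny; have : (O `&` ~` closure (F n)) y by [].
    by rewrite OD.
  by rewrite (nF n).
have [p [Gp Dp]] := @baire_lc W hW lcW _ hD G oG G0.
exists p; split => //; apply: contrapT => nCp.
have : (~` C) p by [].
rewrite eC => -[n _ Fnp].
exact: Dp n (subset_closure Fnp).
Qed.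

Theorem proposition3p11 (WW W : topologicalType) (pi : WW -> W)
  (C : set W) (iota : set_type C -> WW) :
  hausdorff_space WW -> locally_compact [set: WW] ->
  hausdorff_space W -> locally_compact [set: W] ->
  continuous pi -> proper_map pi -> (forall x : W, exists y : WW, pi y = x) ->
  comeagre C ->
  continuous iota ->
  (forall c : set_type C, pi (iota c) = set_val c) ->
  dense (range iota) ->
  weakly_open pi /\ weakly_open iota.
Proof.
move=> _ _ hW lcW cpi _ _ cC ciota piota dI.
split; split => // U oU dU.
- move=> O O0 oO.
  have [y [Oy [c _ ey]]] := dI O O0 oO; subst y.
  have : open (iota @^-1` O) by move/continuousP: ciota; exact.
  case=> G oG eG.
  have : (G `&` U) !=set0.
    apply: dU => //; exists (set_val c).
    by have : (iota @^-1` O) c by []; rewrite -eG.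
  move=> GU0.
  have [p [[Gp Up] Cp]] := @comeagre_meets W hW lcW C cC _ (openI oG oU) GU0.
  pose q : set_type C := @exist _ _ p (mem_set Cp).
  exists (iota q); split.
  + have : (set_val @^-1` G) q by [].
    by rewrite eG.
  + by rewrite /= piota.
- move=> O [c Oc] oO.
  have [G oG eG] : exists2 G : set W, open G & set_val @^-1` G = O by exact: oO.
  have Gc : G (set_val c) by have : O c by []; rewrite -eG.
  have oP : open (pi @^-1` G) by move/continuousP: cpi; exact.
  have : (pi @^-1` G `&` U) !=set0.
    apply: dU => //; exists (iota c); rewrite /= piota //.
  move=> PU0.
  have [y [[Gd Ud] [d _ ey]]] := dI _ PU0 (openI oP oU); subst y.
  exists d; split => //.
  rewrite -eG /=; move: Gd; rewrite /= piota //.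
Qed.
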